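(* Let $p$ be a privilege and $e$ a $p$-pure expression with $D\vdash e:t$. Then for all principals $n$, all $P\subseteq\mathsf{Privileges}$ and all $h\in[\![D]\!]$ with $\mathsf{pure}\,p\,D(h)$, we have $[\![D\vdash e:t]\!]\,n\,P\,h=[\![D\vdash e:t]\!]\,n\,(P\setminus\{p\})\,h$ and $\mathsf{pure}\,p\,t\,([\![D\vdash e:t]\!]\,n\,P\,h)$.
   Context: Fix sets $\mathsf{Principals}$ and $\mathsf{Privileges}$ and an access control list $\mathcal{A}:\mathsf{Principals}\to\mathcal{P}(\mathsf{Privileges})$. Language. Types: $t::=\mathtt{bool}\mid t_1\to t_2$. Expressions: $e::=\mathtt{true}\mid x\mid \mathtt{if}\ e\ \mathtt{then}\ e_1\ \mathtt{else}\ e_2\mid \lambda x.e\mid e_1\,e_2\mid \mathtt{letrec}\ f(x)=e_1\ \mathtt{in}\ e_2\mid \mathtt{signs}\ n\ e\mid \mathtt{dopriv}\ p\ \mathtt{in}\ e\mid \mathtt{check}\ p\ \mathtt{for}\ e\mid \mathtt{test}\ p\ \mathtt{then}\ e_1\ \mathtt{else}\ e_2$ ($n$ a principal, $p$ a privilege). Typing $D\vdash e:t$ is simply typed ($D$ a finite map from variables to types): $\mathtt{letrec}$ typed by $D,f:t_1\to t_2,x:t_1\vdash e_1:t_2$ and $D,f:t_1\to t_2\vdash e_2:t$; $\mathtt{signs},\mathtt{dopriv},\mathtt{check}$ preserve the body type; $\mathtt{test}$, $\mathtt{if}$ need branches of a common type ($\mathtt{if}$ a $\mathtt{bool}$ guard).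 Eager semantics. $\bot,\star$ are two distinct values, neither booleans nor functions. For a cpo $C$, $C_{\bot\star}=C\cup\{\bot,\star\}$ with $u\le v$ iff $u=\bot$ or $u=v$ or $u,v\in C$, $u\le v$. $[\![\mathtt{bool}]\!]=\{\mathsf{true},\mathsf{false}\}$ and $\mathcal{P}(\mathsf{Privileges})$ ordered by equality; $[\![t_1\to t_2]\!]=\mathcal{P}(\mathsf{Privileges})\to[\![t_1]\!]\to[\![t_2]\!]_{\bot\star}$ (continuous, pointwise order). $[\![D]\!]$: records $h$ with $h.x\in[\![D(x)]\!]$. $[\![D\vdash e:t]\!]\in\mathsf{Principals}\to\mathcal{P}(\mathsf{Privileges})\to[\![D]\!]\to[\![t]\!]_{\bot\star}$, written $[\![e]\!]nPh$. ''let $d=E_1$ in $E_2$'' yields $E_1$ if $E_1\in\{\bot,\star\}$, else $E_2$ with $d:=E_1$. $P\sqcup_n\{p\}$ is $P\cup\{p\}$ if $p\in\mathcal{A}(n)$, else $P$. Equations: $[\![\mathtt{true}]\!]nPh=\mathsf{true}$; $[\![x]\!]nPh=h.x$; $[\![\mathtt{if}\ e\ \mathtt{then}\ e_1\ \mathtt{else}\ e_2]\!]nPh=$ let $b=[\![e]\!]nPh$ in (if $b$ then $[\![e_1]\!]nPh$ else $[\![e_2]\!]nPh$); $[\![\lambda x.e]\!]nPh=\lambda P'.\lambda d.[\![e]\!]nP'(h[x\mapsto d])$; $[\![e_1e_2]\!]nPh=$ let $f=[\![e_1]\!]nPh$ in let $d=[\![e_2]\!]nPh$ in $fPd$; $[\![\mathtt{letrec}\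 f(x)=e_1\ \mathtt{in}\ e_2]\!]nPh=[\![e_2]\!]nP(h[f\mapsto\mathit{fix}\,G])$ with $G(g)=\lambda P'.\lambda d.[\![e_1]\!]nP'(h[f\mapsto g,x\mapsto d])$ (least fixed point); $[\![\mathtt{signs}\ n'\ e]\!]nPh=[\![e]\!]n'(P\cap\mathcal{A}(n'))h$; $[\![\mathtt{dopriv}\ p\ \mathtt{in}\ e]\!]nPh=[\![e]\!]n(P\sqcup_n\{p\})h$; $[\![\mathtt{check}\ p\ \mathtt{for}\ e]\!]nPh=$ if $p\in P$ then $[\![e]\!]nPh$ else $\star$; $[\![\mathtt{test}\ p\ \mathtt{then}\ e_1\ \mathtt{else}\ e_2]\!]nPh=$ if $p\in P$ then $[\![e_1]\!]nPh$ else $[\![e_2]\!]nPh$. Purity. An expression is $p$-pure if it has no subexpression of the form $\mathtt{check}\ p\ \mathtt{for}\ e'$ or $\mathtt{test}\ p\ \mathtt{then}\ e'\ \mathtt{else}\ e''$ (for this same $p$). Semantic $p$-purity $\mathsf{pure}\,p\,t$ on $[\![t]\!]_{\bot\star}$: true on $\bot$ and $\star$; $\mathsf{pure}\,p\,\mathtt{bool}(b)$ true; $\mathsf{pure}\,p\,(t_1\to t_2)(f)$ iff for all $P\subseteq\mathsf{Privileges}$, $d\in[\![t_1]\!]$: $\mathsf{pure}\,p\,t_1(d)$ implies $\mathsf{pure}\,p\,t_2(fPd)$ and $fPd=f(P\setminus\{p\})d$. For $h\in[\![D]\!]$, $\mathsf{pure}\,p\,D(h)$ iff $\mathsf{pure}\,p\,(D(x))(h.x)$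 for all $x$ in $D$. *)

(* Defs.v *)
From Stdlib Require Import Arith List ClassicalEpsilon.
Import ListNotations.

Set Implicit Arguments.

Inductive ty : Type :=
| TBool : ty
| TArr : ty -> ty -> ty.

Definition var := nat.

Section Syntax.
Variables (Princ Priv : Type).

Inductive expr : Type :=
| ETrue : expr
| EVar : var -> expr
| EIf : expr -> expr -> expr -> expr
| ELam : var -> expr -> expr
| EApp : expr -> expr -> expr
| ELetrec : var -> var -> expr -> expr -> expr   (* letrec f(x) = e1 in e2 *)
| ESigns : Princ -> expr -> expr
| EDopriv : Priv -> expr -> expr
| ECheck : Priv -> expr -> expr
| ETest : Priv -> expr -> expr -> expr.

Fixpoint ppure (p : Priv) (e : expr) : Prop :=
  match e with
  | ETrue | EVar _ => True
  | EIf e0 e1 e2 => ppure p e0 /\ ppure p e1 /\ ppure p e2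
  | ELam _ e0 => ppure p e0
  | EApp e1 e2 => ppure p e1 /\ ppure p e2
  | ELetrec _ _ e1 e2 => ppure p e1 /\ ppure p e2
  | ESigns _ e0 => ppure p e0
  | EDopriv _ e0 => ppure p e0
  | ECheck q e0 => q <> p /\ ppure p e0
  | ETest q e1 e2 => q <> p /\ ppure p e1 /\ ppure p e2
  end.
End Syntax.

(* Typing contexts D: finite maps from variables to types, as association
   lists; the head binding shadows later ones, so  (x,t)::D  is  D, x:t. *)
Definition ctx := list (var * ty).

Fixpoint lookup (D : ctx) (y : var) : option ty :=
  match D with
  | [] => None
  | (x, t) :: D' => if Nat.eqb y x then Some t else lookup D' y
  end.

(* D |- e : t  (in Type, so that the denotation can recurse on derivations) *)
Inductive typed {Princ Priv : Type} : ctx -> expr Princ Priv -> ty -> Type :=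
| T_True D : typed D (ETrue _ _) TBool
| T_Var D x t : lookup D x = Some t -> typed D (EVar _ _ x) t
| T_If D e e1 e2 t :
    typed D e TBool -> typed D e1 t -> typed D e2 t -> typed D (EIf e e1 e2) t
| T_Lam D x e t1 t2 :
    typed ((x, t1) :: D) e t2 -> typed D (ELam x e) (TArr t1 t2)
| T_App D e1 e2 t1 t2 :
    typed D e1 (TArr t1 t2) -> typed D e2 t1 -> typed D (EApp e1 e2) t2
| T_Letrec D f x e1 e2 t1 t2 t :
    typed ((x, t1) :: (f, TArr t1 t2) :: D) e1 t2 ->
    typed ((f, TArr t1 t2) :: D) e2 t ->
    typed D (ELetrec f x e1 e2) t
| T_Signs D n e t : typed D e t -> typed D (ESigns n e) t
| T_Dopriv D p e t : typed D e t -> typed D (EDopriv p e) t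
| T_Check D p e t : typed D e t -> typed D (ECheck p e) t
| T_Test D p e1 e2 t :
    typed D e1 t -> typed D e2 t -> typed D (ETest p e1 e2) t.

(* Privilege sets P(Privileges) are predicates  Priv -> Prop  (ordered by
   equality).  [[t]] is represented by a carrier  sem t  together with a
   well-formedness predicate (membership in [[t]]) and the cpo order; two
   representatives denote the same element of [[t]] iff they are related
   by the order in both directions (PER-style presentation of the
   continuous function spaces).                                         *)

Inductive lift (X : Type) : Type :=
| Bot : lift X
| Star : lift X     (* star: security exception *)
| Val : X -> lift X.
Arguments Bot {X}. Arguments Star {X}.

Record po (X : Type) := { ple : X -> X -> Prop; pwf : X -> Prop }.

Definition peq X (D : po X) (x y : X) : Prop := ple D x y /\ ple D y x.

Definition chain X (D : po X) (c : nat -> X) : Prop :=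
  (forall k, pwf D (c k)) /\ (forall k, ple D (c k) (c (S k))).

Definition is_lub X (D : po X) (c : nat -> X) (l : X) : Prop :=
  (forall k, ple D (c k) l) /\
  (forall u, pwf D u -> (forall k, ple D (c k) u) -> ple D l u).

Definition lpo X (D : po X) : po (lift X) :=
  {| ple := fun u v =>
        match u, v with
        | Bot, _ => True
        | Star, Star => True
        | Val x, Val y => ple D x y
        | _, _ => False
        end;
     pwf := fun u => match u with Val x => pwf D x | _ => True end |}.

Section Domains.
Variable Priv : Type.
Definition privset := Priv -> Prop.

Fixpoint sem (t : ty) : Type :=
  match t with
  | TBool => bool
  | TArr t1 t2 => privset -> sem t1 -> lift (sem t2)
  end.

(* [[t]]: bool discretely ordered; [[t1 -> t2]] = continuous functions
   P(Privileges) -> [[t1]] -> [[t2]]_{bot,star}, pointwise order.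
   (P(Privileges) is discrete, so continuity is continuity in the [[t1]]
   argument: preservation of lubs of omega-chains.) *)
Fixpoint dom (t : ty) : po (sem t) :=
  match t return po (sem t) with
  | TBool => {| ple := fun x y => x = y; pwf := fun _ => True |}
  | TArr t1 t2 =>
      {| ple := fun f g => forall P d, pwf (dom t1) d ->
                  ple (lpo (dom t2)) (f P d) (g P d);
         pwf := fun f =>
           (forall P d, pwf (dom t1) d -> pwf (lpo (dom t2)) (f P d)) /\
           (forall P c l, chain (dom t1) c -> pwf (dom t1) l ->
              is_lub (dom t1) c l ->
              is_lub (lpo (dom t2)) (fun k => f P (c k)) (f P l)) |}
  end.

Definition seq_l (t : ty) (u v : lift (sem t)) : Prop := peq (lpo (dom t)) u v.

Definition setminus1 (P : privset) (p : Priv) : privset := fun q => P q /\ q <> p.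

Fixpoint pure (p : Priv) (t : ty) : sem t -> Prop :=
  match t return sem t -> Prop with
  | TBool => fun _ => True
  | TArr t1 t2 => fun f =>
      forall P d, pwf (dom t1) d -> pure p t1 d ->
        (match f P d with Val v => pure p t2 v | _ => True end) /\
        seq_l t2 (f P d) (f (setminus1 P p) d)
  end.

Definition pure_l (p : Priv) (t : ty) (u : lift (sem t)) : Prop :=
  match u with Val v => pure p t v | _ => True end.

Definition envT (o : option ty) : Type :=
  match o with Some t => sem t | None => unit end.

Definition env (D : ctx) : Type := forall y : var, envT (lookup D y).

Definition ext (D : ctx) (h : env D) (x : var) (t : ty) (v : sem t)
  : env ((x, t) :: D) :=
  fun y => match Nat.eqb y x as b
                 return envT (if b then Some t else lookup D y) with
           | true => v
           | false => h y
           end.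

Definition owf (o : option ty) : envT o -> Prop :=
  match o return envT o -> Prop with
  | Some t => pwf (dom t)
  | None => fun _ => True
  end.

Definition opure (p : Priv) (o : option ty) : envT o -> Prop :=
  match o return envT o -> Prop with
  | Some t => pure p t
  | None => fun _ => True
  end.

Definition env_wf (D : ctx) (h : env D) : Prop := forall y, owf (lookup D y) (h y).
Definition env_pure (p : Priv) (D : ctx) (h : env D) : Prop :=
  forall y, opure p (lookup D y) (h y).

Definition is_lfp X (D : po X) (G : X -> X) (x : X) : Prop :=
  pwf D x /\ peq D (G x) x /\
  (forall y, pwf D y -> peq D (G y) y -> ple D x y).

Definition fixp (t1 t2 : ty) (G : sem (TArr t1 t2) -> sem (TArr t1 t2))
  : sem (TArr t1 t2) :=
  epsilon (inhabits (fun (_ : privset) (_ : sem t1) => @Bot (sem t2)))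
          (is_lfp (dom (TArr t1 t2)) G).

End Domains.

Arguments ext {Priv D} h x {t} v.
Arguments fixp {Priv t1 t2} G.
Arguments pure {Priv} p t _.
Arguments pure_l {Priv} p t _.
Arguments seq_l {Priv} t u v.
Arguments env_wf {Priv} D h.
Arguments env_pure {Priv} p D h.

Section Denot.
Variables (Princ Priv : Type) (A : Princ -> privset Priv).

Definition dec (Q : Prop) : bool :=
  if excluded_middle_informative Q then true else false.

Definition join_priv (n : Princ) (P : privset Priv) (p : Priv) : privset Priv :=
  if dec (A n p) then (fun q => P q \/ q = p) else P.

Fixpoint den (D : ctx) (e : expr Princ Priv) (t : ty) (d : typed D e t)
  {struct d} : Princ -> privset Priv -> env Priv D -> lift (sem Priv t) :=
  match d in typed D e t
        return Princ -> privset Priv -> env Priv D -> lift (sem Priv t) with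
  | @T_True _ _ _ => fun n P h => Val true
  | @T_Var _ _ D x t Hx => fun n P h =>
      Val (eq_rect (lookup D x) (envT Priv) (h x) (Some t) Hx)
  | @T_If _ _ _ _ _ _ _ d0 d1 d2 => fun n P h =>
      match den d0 n P h with
      | Bot => Bot
      | Star => Star
      | Val b => if b then den d1 n P h else den d2 n P h
      end
  | @T_Lam _ _ _ x _ _ _ d1 => fun n P h =>
      Val (fun P' v => den d1 n P' (ext h x v))
  | @T_App _ _ _ _ _ _ _ d1 d2 => fun n P h =>
      match den d1 n P h with
      | Bot => Bot
      | Star => Star
      | Val f =>
          match den d2 n P h with
          | Bot => Bot
          | Star => Star
          | Val v => f P v
          end
      end
  | @T_Letrec _ _ _ f x _ _ _ _ _ d1 d2 => fun n P h =>
      den d2 n P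
        (ext h f
           (fixp (fun g => fun P' v => den d1 n P' (ext (ext h f g) x v))))
  | @T_Signs _ _ _ n' _ _ d1 => fun n P h => den d1 n' (fun q => P q /\ A n' q) h
  | @T_Dopriv _ _ _ p _ _ d1 => fun n P h => den d1 n (join_priv n P p) h
  | @T_Check _ _ _ p _ _ d1 => fun n P h => if dec (P p) then den d1 n P h else Star
  | @T_Test _ _ _ p _ _ _ d1 d2 => fun n P h =>
      if dec (P p) then den d1 n P h else den d2 n P h
  end.

End Denot.

(* Main.v *)
Require Import Defs.
From Stdlib Require Import Arith Lia List ClassicalEpsilon Classical FunctionalExtensionality PropExtensionality.
Set Implicit Arguments.

Section PO.
Variables (X : Type) (D : po X).
Hypothesis Drefl : forall x, ple D x x.
Hypothesis Dtrans : forall x y z, ple D x y -> ple D y z -> ple D x z.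

Lemma lift_refl : forall x, ple (lpo D) x x.
Proof. intros [| |x]; simpl; auto. Qed.

Lemma lift_trans : forall x y z, ple (lpo D) x y -> ple (lpo D) y z -> ple (lpo D) x z.
Proof. intros [| |x] [| |y] [| |z]; simpl; try tauto. apply Dtrans. Qed.

Lemma chain_mono : forall c, (forall k, ple D (c k) (c (S k))) ->
  forall k k', k <= k' -> ple D (c k) (c k').
Proof.
  intros c Hc k k' H. induction H. apply Drefl. eapply Dtrans; eauto.
Qed.

Lemma lub_unique : forall c l1 l2, is_lub D c l1 -> is_lub D c l2 -> pwf D l1 -> pwf D l2 ->
  ple D l1 l2 /\ ple D l2 l1.
Proof. intros c l1 l2 [U1 L1] [U2 L2] W1 W2. split; [apply L1|apply L2]; auto. Qed.

Lemma lub_peq : forall c l l', is_lub D c l -> ple D l l' -> ple D l' l -> is_lub D c l'.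
Proof.
  intros c l l' [U L] H1 H2. split.
  - intro k. eapply Dtrans; eauto.
  - intros u Wu Hu. eapply Dtrans; [apply H2|]. apply L; auto.
Qed.

Lemma lub_const : forall x, is_lub D (fun _ => x) x.
Proof. intros x. split; auto. intros u _ Hu. apply (Hu 0). Qed.

Lemma lub_tail : forall c l k0, (forall k, ple D (c k) (c (S k))) ->
  is_lub D c l -> is_lub D (fun k => c (k0 + k)) l.
Proof.
  intros c l k0 Hc [U L]. split.
  - intro k. apply U.
  - intros u Wu Hu. apply L; auto. intro k. eapply Dtrans; [|apply (Hu k)].
    apply chain_mono; auto. lia.
Qed.

Lemma lub_untail : forall c l k0, (forall k, ple D (c k) (c (S k))) ->
  is_lub D (fun k => c (k0 + k)) l -> is_lub D c l.
Proof.
  intros c l k0 Hc [U L]. split.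
  - intro k. eapply Dtrans; [|apply (U k)]. apply chain_mono; auto. lia.
  - intros u Wu Hu. apply L; auto.
Qed.

Lemma lub_mono : forall c c' l l', (forall k, ple D (c k) (c' k)) ->
  is_lub D c l -> is_lub D c' l' -> pwf D l' -> ple D l l'.
Proof.
  intros c c' l l' H [U L] [U' L'] W. apply L; auto. intro k. eapply Dtrans; eauto.
Qed.

Lemma lub_exchange : forall (a : nat -> nat -> X) r s L,
  (forall k, is_lub D (fun n => a k n) (r k)) ->
  (forall n, is_lub D (fun k => a k n) (s n)) ->
  (forall k, pwf D (r k)) -> (forall n, pwf D (s n)) ->
  is_lub D s L -> pwf D L -> is_lub D r L.
Proof.
  intros a r s L Hr Hs Wr Ws [U LL] WL. split.
  - intro k. apply (proj2 (Hr k)); auto. intro n.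
    eapply Dtrans; [apply (proj1 (Hs n) k)|apply U].
  - intros u Wu Hu. apply LL; auto. intro n. apply (proj2 (Hs n)); auto.
    intro k. eapply Dtrans; [apply (proj1 (Hr k) n)|apply Hu].
Qed.

End PO.
Section LIFT.
Variables (X : Type) (D : po X).
Hypothesis Drefl : forall x, ple D x x.
Hypothesis Dtrans : forall x y z, ple D x y -> ple D y z -> ple D x z.

Lemma lchain_mono : forall c, chain (lpo D) c -> forall k k', k <= k' -> ple (lpo D) (c k) (c k').
Proof.
  intros c [_ Hc]. apply chain_mono; auto. apply lift_refl; auto. apply lift_trans; auto.
Qed.

Lemma lift_struct : forall c, chain (lpo D) c ->
  (forall k, c k = Bot) \/ (exists k0, forall k, k0 <= k -> c k = Star) \/
  (exists k0 cx, (forall k, c (k0+k) = Val (cx k)) /\ chain D cx).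
Proof.
  intros c Hc.
  destruct (classic (exists k, c k <> Bot)) as [[k0 Hk0]|Hn].
  - destruct (c k0) eqn:E; [congruence| |].
    + right; left. exists k0. intros k Hk. pose proof (lchain_mono Hc Hk) as H.
      rewrite E in H. simpl in H. destruct (c k); tauto.
    + right; right. exists k0.
      exists (fun j => match c (k0 + j) with Val y => y | _ => x end).
      assert (HV : forall j, exists y, c (k0 + j) = Val y).
      { intro j. assert (k0 <= k0 + j) by lia. pose proof (lchain_mono Hc H) as H1.
        rewrite E in H1. simpl in H1. destruct (c (k0+j)); try tauto. eauto. }
      assert (HV2 : forall j, c (k0 + j) = Val (match c (k0 + j) with Val y => y | _ => x end)).
      { intro j. destruct (HV j) as [y Hy]. rewrite Hy. reflexivity. }
      split; auto. destruct Hc as [W M]. split.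
      * intro j. specialize (W (k0+j)). rewrite HV2 in W. exact W.
      * intro j. specialize (M (k0+j)).
        replace (S (k0 + j)) with (k0 + S j) in M by lia.
        rewrite (HV2 j), (HV2 (S j)) in M. exact M.
  - left. intro k. destruct (c k) eqn:E; auto. exfalso; apply Hn; exists k; congruence.
    exfalso; apply Hn; exists k; congruence.
Qed.

Lemma val_lub : forall cx lx, is_lub D cx lx -> is_lub (lpo D) (fun k => Val (cx k)) (Val lx).
Proof.
  intros cx lx [U L]. split.
  - intro k. apply U.
  - intros [| |w] Wu Hu. specialize (Hu 0); simpl in Hu; tauto.
    specialize (Hu 0); simpl in Hu; tauto.
    simpl. apply L; auto.
Qed.

Hypothesis Dlub : forall c, chain D c -> exists l, pwf D l /\ is_lub D c l.

Lemma star_lub : forall c k0, chain (lpo D) c -> (forall k, k0 <= k -> c k = Star) ->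
  is_lub (lpo D) c Star.
Proof.
  intros c k0 Hc H. split.
  - intro k. eapply lift_trans; auto. apply (lchain_mono Hc (Nat.le_max_l k k0)).
    rewrite H; simpl; auto. lia.
  - intros u _ Hu. specialize (Hu k0). rewrite H in Hu; auto.
Qed.

Lemma lift_lub_ex : forall c, chain (lpo D) c -> exists l, pwf (lpo D) l /\ is_lub (lpo D) c l.
Proof.
  intros c Hc. destruct (lift_struct Hc) as [H|[[k0 H]|[k0 [cx [H1 H2]]]]].
  - exists Bot. split. simpl; auto. split. intro k. rewrite H. simpl; auto. simpl; auto.
  - exists Star. split. simpl; auto. eapply star_lub; eauto.
  - destruct (Dlub H2) as [lx [Wl Hl]]. exists (Val lx). split. exact Wl.
    apply lub_untail with (k0 := k0). apply lift_refl; auto. apply lift_trans; auto.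
    apply Hc. replace (fun k => c (k0 + k)) with (fun k => Val (cx k)).
    apply val_lub; auto. apply functional_extensionality. intro k. rewrite H1. auto.
Qed.

Lemma lift_lub_cases : forall c l, chain (lpo D) c -> is_lub (lpo D) c l -> pwf (lpo D) l ->
  (l = Bot /\ forall k, c k = Bot) \/
  (l = Star /\ exists k0, forall k, k0 <= k -> c k = Star) \/
  (exists x k0 cx, l = Val x /\ (forall k, c (k0+k) = Val (cx k)) /\ chain D cx /\ is_lub D cx x).
Proof.
  intros c l Hc Hl Wl. destruct (lift_struct Hc) as [H|[[k0 H]|[k0 [cx [H1 H2]]]]].
  - left. split; auto. assert (ple (lpo D) l Bot). apply Hl. simpl; auto.
    intro k. rewrite H; simpl; auto. destruct l; simpl in H0; tauto.
  - right; left. split; [|eauto]. pose proof (star_lub Hc H) as HS.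
    destruct (lub_unique Hl HS Wl I) as [A1 A2].
    destruct l; simpl in *; tauto.
  - right; right. destruct (Dlub H2) as [lx [Wx Hx]].
    assert (HL : is_lub (lpo D) c (Val lx)).
    { apply lub_untail with (k0 := k0). apply lift_refl; auto. apply lift_trans; auto.
      apply Hc. replace (fun k => c (k0 + k)) with (fun k => Val (cx k)).
      apply val_lub; auto. apply functional_extensionality. intro k. rewrite H1. auto. }
    destruct (lub_unique Hl HL Wl Wx) as [A1 A2].
    destruct l as [| |x]; simpl in A1, A2; try tauto.
    exists x, k0, cx. split; [reflexivity|]. split; [exact H1|]. split; [exact H2|]. exact (lub_peq Drefl Dtrans x Hx A2 A1).
Qed.

End LIFT.
Section TYPES.
Variable Priv : Type.
Notation dm := (dom Priv).
Notation S := (sem Priv).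

Lemma dom_refl : forall t (x : S t), ple (dm t) x x.
Proof.
  induction t; simpl; auto. intros x P d _. apply lift_refl. apply IHt2.
Qed.

Lemma dom_trans : forall t (x y z : S t), ple (dm t) x y -> ple (dm t) y z -> ple (dm t) x z.
Proof.
  induction t; simpl. intros; congruence.
  intros x y z H1 H2 P d Hd. eapply lift_trans. apply IHt2. apply H1; auto. apply H2; auto.
Qed.

Lemma ldom_refl : forall t (x : lift (S t)), ple (lpo (dm t)) x x.
Proof. intro t. apply lift_refl, dom_refl. Qed.
Lemma ldom_trans : forall t (x y z : lift (S t)), ple (lpo (dm t)) x y -> ple (lpo (dm t)) y z -> ple (lpo (dm t)) x z.
Proof. intro t. apply lift_trans, dom_trans. Qed.

Lemma dchain_mono {t} {c : nat -> S t} (Hc : chain (dm t) c) :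
  forall k k', k <= k' -> ple (dm t) (c k) (c k').
Proof. destruct Hc as [_ H]. apply chain_mono; auto. apply dom_refl. apply dom_trans. Qed.

Lemma wf_mono : forall t1 t2 (f : S (TArr t1 t2)), pwf (dm (TArr t1 t2)) f ->
  forall P d d', pwf (dm t1) d -> pwf (dm t1) d' -> ple (dm t1) d d' ->
  ple (lpo (dm t2)) (f P d) (f P d').
Proof.
  intros t1 t2 f [_ C] P d d' Hd Hd' Hle.
  pose (c := fun k : nat => match k with 0 => d | _ => d' end).
  assert (Hc : chain (dm t1) c).
  { split. intros [|k]; simpl; auto. intros [|k]; simpl; auto; apply dom_refl. }
  assert (Hl : is_lub (dm t1) c d').
  { split. intros [|k]; simpl; auto; apply dom_refl. intros u _ Hu. apply (Hu 1). }
  destruct (C P c d' Hc Hd' Hl) as [U _]. apply (U 0).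
Qed.

Lemma pointwise_lub : forall t1 t2 (c : nat -> S (TArr t1 t2)) l,
  (forall P d, pwf (dm t1) d -> is_lub (lpo (dm t2)) (fun k => c k P d) (l P d)) ->
  is_lub (dm (TArr t1 t2)) c l.
Proof.
  intros t1 t2 c l H. split.
  - intro k. simpl. intros P d Hd. apply (proj1 (H P d Hd) k).
  - intros u Wu Hu. simpl. intros P d Hd. apply (proj2 (H P d Hd)).
    apply (proj1 Wu P d Hd). intro k. apply (Hu k P d Hd).
Qed.

Lemma fun_chain_at : forall t1 t2 (c : nat -> S (TArr t1 t2)) P d,
  chain (dm (TArr t1 t2)) c -> pwf (dm t1) d -> chain (lpo (dm t2)) (fun k => c k P d).
Proof.
  intros t1 t2 c P d [W M] Hd. split.
  - intro k. apply (proj1 (W k) P d Hd).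
  - intro k. apply (M k P d Hd).
Qed.

Lemma fun_lub_ex : forall t1 t2,
  (forall c, chain (dm t2) c -> exists l, pwf (dm t2) l /\ is_lub (dm t2) c l) ->
  forall c, chain (dm (TArr t1 t2)) c ->
  exists g, pwf (dm (TArr t1 t2)) g /\
    (forall P d, pwf (dm t1) d -> is_lub (lpo (dm t2)) (fun k => c k P d) (g P d)).
Proof.
  intros t1 t2 H2 c Hc.
  pose (g := fun P d => epsilon (inhabits (@Bot (S t2)))
      (fun l => pwf (lpo (dm t2)) l /\ is_lub (lpo (dm t2)) (fun k => c k P d) l)).
  assert (Hg : forall P d, pwf (dm t1) d ->
     pwf (lpo (dm t2)) (g P d) /\ is_lub (lpo (dm t2)) (fun k => c k P d) (g P d)).
  { intros P d Hd. apply epsilon_spec. apply lift_lub_ex.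
    apply dom_refl. apply dom_trans. exact H2. apply fun_chain_at; auto. }
  exists g. split; [|intros; apply Hg; auto].
  split.
  - intros P d Hd. apply Hg; auto.
  - intros P e l' He Wl' Hl'. destruct He as [We Me].
    split.
    + intro j. apply (proj2 (proj2 (Hg P (e j) (We j)))). apply Hg; auto.
      intro k. eapply ldom_trans.
      * eapply wf_mono; [apply (proj1 Hc) | apply We | exact Wl' | apply (proj1 Hl')].
      * apply (proj1 (proj2 (Hg P l' Wl')) k).
    + intros u Wu Hu. apply (proj2 (proj2 (Hg P l' Wl'))); auto.
      intro k. destruct (proj1 Hc k) as [_ Ck].
      apply (proj2 (Ck P e l' (conj We Me) Wl' Hl')); auto.
      intro j. eapply ldom_trans; [|apply (Hu j)].
      apply (proj1 (proj2 (Hg P (e j) (We j))) k).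
Qed.

Lemma dom_lub : forall t c, chain (dm t) c -> exists l, pwf (dm t) l /\ is_lub (dm t) c l.
Proof.
  induction t.
  - intros c [_ M]. exists (c 0). simpl in M.
    assert (E : forall k, c k = c 0). { induction k; auto. rewrite <- M; auto. }
    split. simpl; auto. split. intro k; simpl; auto. intros u _ Hu. apply (Hu 0).
  - intros c Hc. destruct (@fun_lub_ex t1 t2 IHt2 c Hc) as [g [Wg Hg]].
    exists g. split; auto. apply pointwise_lub. auto.
Qed.

Lemma lub_pointwise : forall t1 t2 (c : nat -> S (TArr t1 t2)) l,
  chain (dm (TArr t1 t2)) c -> is_lub (dm (TArr t1 t2)) c l -> pwf (dm (TArr t1 t2)) l ->
  forall P d, pwf (dm t1) d -> is_lub (lpo (dm t2)) (fun k => c k P d) (l P d).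
Proof.
  intros t1 t2 c l Hc Hl Wl P d Hd.
  destruct (@fun_lub_ex t1 t2 (@dom_lub t2) c Hc) as [g [Wg Hg]].
  assert (Hg' : is_lub (dm (TArr t1 t2)) c g) by (apply pointwise_lub; auto).
  destruct (lub_unique Hl Hg' Wl Wg) as [A1 A2].
  apply (lub_peq (@ldom_refl t2) (@ldom_trans t2) (l P d) (Hg P d Hd)).
  apply A2; auto. apply A1; auto.
Qed.

Lemma diag_lub : forall t1 t2 (Fc : nat -> S (TArr t1 t2)) F (Vc : nat -> S t1) V P,
  chain (dm (TArr t1 t2)) Fc -> is_lub (dm (TArr t1 t2)) Fc F -> pwf (dm (TArr t1 t2)) F ->
  chain (dm t1) Vc -> is_lub (dm t1) Vc V -> pwf (dm t1) V ->
  is_lub (lpo (dm t2)) (fun k => Fc k P (Vc k)) (F P V).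
Proof.
  intros t1 t2 Fc F Vc V P HF LF WF HV LV WV. split.
  - intro k. eapply ldom_trans.
    + eapply wf_mono; [apply (proj1 HF) | apply (proj1 HV) | exact WV | apply (proj1 LV)].
    + apply (proj1 LF k P V WV).
  - intros u Wu Hu. apply (proj2 (lub_pointwise HF LF WF P _ WV)); auto.
    intro k. apply (proj2 ((proj2 (proj1 HF k)) P Vc V HV WV LV)); auto.
    intro j. eapply ldom_trans; [|apply (Hu (Nat.max k j))].
    eapply ldom_trans.
    + apply wf_mono with (d' := Vc (Nat.max k j)). apply (proj1 HF). apply (proj1 HV).
      apply (proj1 HV). apply (dchain_mono HV). lia.
    + apply (dchain_mono HF (Nat.le_max_l k j)).
      apply (proj1 HV).
Qed.

Variable p : Priv.

Lemma pure_adm : forall t (c : nat -> S t) l, chain (dm t) c -> (forall k, pure p t (c k)) ->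
  is_lub (dm t) c l -> pwf (dm t) l -> pure p t l.
Proof.
  induction t; simpl; auto.
  intros c l Hc Hp Hl Wl P d Hd Hpd.
  pose proof (lub_pointwise Hc Hl Wl P _ Hd) as L1.
  pose proof (lub_pointwise Hc Hl Wl (setminus1 P p) _ Hd) as L2.
  assert (HC1 : chain (lpo (dm t2)) (fun k => c k P d)) by (apply fun_chain_at; auto).
  split.
  - destruct (lift_lub_cases (@dom_refl t2) (@dom_trans t2) (@dom_lub t2)
       HC1 L1 (proj1 Wl P d Hd))
      as [[E _]|[[E _]|[x [k0 [cx [E [H1 [H2 H3]]]]]]]]; rewrite E; auto.
    apply (IHt2 cx); auto. intro j. specialize (Hp (k0 + j) P d Hd Hpd).
    rewrite H1 in Hp. apply Hp.
    pose proof (proj1 Wl P d Hd) as Wx. rewrite E in Wx. exact Wx.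
  - split.
    + apply (proj2 L1). apply (proj1 Wl _ d Hd). intro k. eapply ldom_trans.
      apply (proj1 (proj2 (Hp k P d Hd Hpd))). apply (proj1 L2).
    + apply (proj2 L2). apply (proj1 Wl _ d Hd). intro k. eapply ldom_trans.
      apply (proj2 (proj2 (Hp k P d Hd Hpd))). apply (proj1 L1).
Qed.

End TYPES.
Section FIX.
Variables (Priv : Type) (t1 t2 : ty).
Notation FT := (TArr t1 t2).
Notation FD := (dom Priv FT).
Notation F := (sem Priv FT).
Variables (H : Type) (Hwf : H -> Prop) (Hle : H -> H -> Prop) (Hlub : (nat -> H) -> H -> Prop)
  (G : H -> F -> F).
Hypothesis Hle_refl : forall h, Hle h h.
Hypothesis Hlub_const : forall h, Hlub (fun _ => h) h.
Hypothesis Gwf : forall h g, Hwf h -> pwf FD g -> pwf FD (G h g).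
Hypothesis Gmono : forall h1 h2 g1 g2, Hwf h1 -> Hwf h2 -> Hle h1 h2 -> pwf FD g1 -> pwf FD g2 ->
  ple FD g1 g2 -> ple FD (G h1 g1) (G h2 g2).
Hypothesis Gcont : forall hc h gc g, (forall k, Hwf (hc k)) -> (forall k, Hle (hc k) (hc (S k))) ->
  Hwf h -> Hlub hc h -> chain FD gc -> is_lub FD gc g -> pwf FD g ->
  is_lub FD (fun k => G (hc k) (gc k)) (G h g).

Definition botf : F := fun _ _ => Bot.

Lemma botf_wf : pwf FD botf.
Proof.
  split. intros; exact I. intros P c l _ _ _. apply (lub_const (lpo (dom Priv t2)) (@ldom_refl Priv t2) Bot).
Qed.

Lemma botf_le : forall g, ple FD botf g.
Proof. intros g P d _. exact I. Qed.

Fixpoint it (h : H) (n : nat) : F := match n with 0 => botf | S n => G h (it h n) end.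

Lemma it_wf : forall h n, Hwf h -> pwf FD (it h n).
Proof. intros h n Hh. induction n. apply botf_wf. apply Gwf; auto. Qed.

Lemma it_le : forall h1 h2 n, Hwf h1 -> Hwf h2 -> Hle h1 h2 -> ple FD (it h1 n) (it h2 n).
Proof.
  intros h1 h2 n W1 W2 L. induction n. apply botf_le. apply Gmono; auto; apply it_wf; auto.
Qed.

Lemma it_chain : forall h, Hwf h -> chain FD (it h).
Proof.
  intros h Hh. split. intro; apply it_wf; auto.
  intro n. induction n. apply botf_le. apply Gmono; auto; try apply it_wf; auto.
  all: try (apply Gwf; auto; apply it_wf; auto).
Qed.

Lemma kleene : forall h, Hwf h -> exists X, is_lub FD (it h) X /\ is_lfp FD (G h) X.
Proof.
  intros h Hh. destruct (dom_lub Priv FT (it_chain Hh)) as [X [WX LX]].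
  exists X. split; auto. split; [exact WX|]. split.
  - assert (L1 : is_lub FD (fun k => G ((fun _ => h) k) (it h k)) (G h X)).
    { apply Gcont; auto. apply it_chain; auto. }
    assert (L2 : is_lub FD (fun k => it h (1 + k)) X).
    { apply (lub_tail (@dom_refl Priv FT) (@dom_trans Priv FT) 1 (proj2 (it_chain Hh)) LX). }
    apply (lub_unique L1 L2); auto.
  - intros y Wy [Ey1 Ey2]. apply (proj2 LX); auto. intro n. induction n.
    apply botf_le. eapply dom_trans; [|apply Ey1]. apply Gmono; auto. apply it_wf; auto.
Qed.

Lemma fixp_spec : forall h, Hwf h -> is_lfp FD (G h) (fixp (G h)) /\ is_lub FD (it h) (fixp (G h)).
Proof.
  intros h Hh. destruct (kleene Hh) as [X [LX FX]].
  assert (Hf : is_lfp FD (G h) (fixp (G h))).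
  { unfold fixp. apply epsilon_spec. eauto. }
  split; auto.
  destruct Hf as [W1 [E1 L1]]. destruct FX as [W2 [E2 L2]].
  apply (lub_peq (@dom_refl Priv FT) (@dom_trans Priv FT) _ LX).
  apply L2; auto. apply L1; auto.
Qed.

Lemma fixp_wf : forall h, Hwf h -> pwf FD (fixp (G h)).
Proof. intros h Hh. apply (fixp_spec Hh). Qed.

Lemma fixp_mono : forall h1 h2, Hwf h1 -> Hwf h2 -> Hle h1 h2 -> ple FD (fixp (G h1)) (fixp (G h2)).
Proof.
  intros h1 h2 W1 W2 L. eapply (lub_mono (@dom_refl Priv FT) (@dom_trans Priv FT)).
  2: apply (proj2 (fixp_spec W1)). 2: apply (proj2 (fixp_spec W2)).
  intro k. apply it_le; auto. apply fixp_wf; auto.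
Qed.

Lemma fixp_cont : forall hc h, (forall k, Hwf (hc k)) -> (forall k, Hle (hc k) (hc (S k))) ->
  Hwf h -> Hlub hc h -> is_lub FD (fun k => fixp (G (hc k))) (fixp (G h)).
Proof.
  intros hc h W M Wh Lh.
  assert (Col : forall n, is_lub FD (fun k => it (hc k) n) (it h n)).
  { induction n. apply (lub_const FD (@dom_refl Priv FT) botf).
    apply Gcont; auto. split. intro; apply it_wf; auto. intro k; apply it_le; auto.
    apply it_wf; auto. }
  apply (lub_exchange (@dom_trans Priv FT) (fun k n => it (hc k) n)
          (fun k => fixp (G (hc k))) (s := fun n => it h n)).
  - intro k. apply (fixp_spec (W k)).
  - exact Col.
  - intro k. apply fixp_wf; auto.
  - intro n. apply it_wf; auto.
  - apply (fixp_spec Wh).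
  - apply fixp_wf; auto.
Qed.

Variable p : Priv.
Hypothesis Gpure : forall h g, Hwf h -> pwf FD g -> pure p FT g -> pure p FT (G h g).

Lemma fixp_pure : forall h, Hwf h -> pure p FT (fixp (G h)).
Proof.
  intros h Hh. apply (pure_adm p FT (it_chain Hh)).
  - intro n. induction n. intros P d _ _. split. exact I. split; exact I.
    apply Gpure; auto. apply it_wf; auto.
  - apply (fixp_spec Hh).
  - apply fixp_wf; auto.
Qed.

End FIX.
Section ENV.
Variable Priv : Type.

Definition ople (o : option ty) : envT Priv o -> envT Priv o -> Prop :=
  match o return envT Priv o -> envT Priv o -> Prop with
  | Some t => ple (dom Priv t) | None => fun _ _ => True end.
Definition olub (o : option ty) : (nat -> envT Priv o) -> envT Priv o -> Prop :=
  match o return (nat -> envT Priv o) -> envT Priv o -> Prop with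
  | Some t => is_lub (dom Priv t) | None => fun _ _ => True end.

Unset Implicit Arguments.
Definition env_le (D : ctx) (h1 h2 : env Priv D) : Prop := forall y, ople (lookup D y) (h1 y) (h2 y).
Definition env_lub (D : ctx) (hc : nat -> env Priv D) (h : env Priv D) : Prop :=
  forall y, olub (lookup D y) (fun k => hc k y) (h y).
Definition env_chain (D : ctx) (hc : nat -> env Priv D) : Prop :=
  (forall k, env_wf D (hc k)) /\ (forall k, env_le D (hc k) (hc (S k))).

Set Implicit Arguments.
Lemma env_le_refl : forall D h, env_le D h h.
Proof. intros D h y. generalize (h y). destruct (lookup D y); simpl; auto. intro; apply dom_refl. Qed.

Lemma env_lub_const : forall D h, env_lub D (fun _ => h) h.
Proof. intros D h y. generalize (h y). destruct (lookup D y); simpl; auto. intro; apply lub_const. apply dom_refl. Qed.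

Lemma env_chain_tail : forall D hc k0, env_chain D hc -> env_chain D (fun k => hc (k0 + k)).
Proof.
  intros D hc k0 [W M]. split. intro; auto. intro k.
  replace (k0 + S k) with (S (k0 + k)) by lia. auto.
Qed.

Lemma env_lub_tail : forall D hc h k0, env_chain D hc -> env_lub D hc h ->
  env_lub D (fun k => hc (k0 + k)) h.
Proof.
  intros D hc h k0 [W M] L y. specialize (L y).
  assert (M' : forall k, ople (lookup D y) (hc k y) (hc (S k) y)) by (intro; apply M).
  pose (c := fun k => hc k y). change (olub _ c (h y)) in L.
  change (forall k, ople _ (c k) (c (S k))) in M'.
  change (olub _ (fun k => c (k0+k)) (h y)).
  clearbody c. clear - L M'. revert L M'. generalize (h y). revert c.
  destruct (lookup D y); simpl; auto.
  intros c hy L M. apply (lub_tail (@dom_refl Priv t) (@dom_trans Priv t) k0 M L).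
Qed.

Lemma ext_wf : forall D (h : env Priv D) x t (v : sem Priv t),
  env_wf D h -> pwf (dom Priv t) v -> env_wf ((x, t) :: D) (ext h x v).
Proof.
  intros D h x t v Hh Hv y. unfold ext. simpl. destruct (Nat.eqb y x); simpl; auto; try apply Hh.
Qed.

Lemma ext_pure : forall p D (h : env Priv D) x t (v : sem Priv t),
  env_pure p D h -> pure p t v -> env_pure p ((x, t) :: D) (ext h x v).
Proof.
  intros p D h x t v Hh Hv y. unfold ext. simpl. destruct (Nat.eqb y x); simpl; auto; try apply Hh.
Qed.

Lemma ext_le : forall D (h1 h2 : env Priv D) x t (v1 v2 : sem Priv t),
  env_le D h1 h2 -> ple (dom Priv t) v1 v2 -> env_le ((x, t) :: D) (ext h1 x v1) (ext h2 x v2).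
Proof.
  intros D h1 h2 x t v1 v2 Hh Hv y. unfold ext. simpl. destruct (Nat.eqb y x); simpl; auto; try apply Hh.
Qed.

Lemma ext_lub : forall D (hc : nat -> env Priv D) h x t (vc : nat -> sem Priv t) v,
  env_lub D hc h -> is_lub (dom Priv t) vc v ->
  env_lub ((x, t) :: D) (fun k => ext (hc k) x (vc k)) (ext h x v).
Proof.
  intros D hc h x t vc v Hh Hv y. unfold ext. simpl. destruct (Nat.eqb y x); simpl; auto; try apply Hh.
Qed.

Lemma ext_chain : forall D (hc : nat -> env Priv D) x t (vc : nat -> sem Priv t),
  env_chain D hc -> chain (dom Priv t) vc -> env_chain ((x, t) :: D) (fun k => ext (hc k) x (vc k)).
Proof.
  intros D hc x t vc [W M] [Wv Mv]. split.
  intro k. apply ext_wf; auto. intro k. apply ext_le; auto.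
Qed.

Lemma var_wf : forall o (v : envT Priv o) t (E : o = Some t),
  @owf Priv o v -> pwf (dom Priv t) (eq_rect o (envT Priv) v (Some t) E).
Proof. intros o v t E. subst. simpl. auto. Qed.
Lemma var_le : forall o (v1 v2 : envT Priv o) t (E : o = Some t), ople o v1 v2 ->
  ple (dom Priv t) (eq_rect o (envT Priv) v1 (Some t) E) (eq_rect o (envT Priv) v2 (Some t) E).
Proof. intros o v1 v2 t E. subst. simpl. auto. Qed.
Lemma var_lub : forall o (vc : nat -> envT Priv o) v t (E : o = Some t), olub o vc v ->
  is_lub (dom Priv t) (fun k => eq_rect o (envT Priv) (vc k) (Some t) E) (eq_rect o (envT Priv) v (Some t) E).
Proof. intros o vc v t E. subst. simpl. auto. Qed.
Lemma var_pure : forall p o (v : envT Priv o) t (E : o = Some t),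
  @opure Priv p o v -> pure p t (eq_rect o (envT Priv) v (Some t) E).
Proof. intros p o v t E. subst. simpl. auto. Qed.

End ENV.
Arguments env_le {Priv} D h1 h2.
Arguments env_lub {Priv} D hc h.
Arguments env_chain {Priv} D hc.
Arguments ople {Priv} o _ _.
Arguments olub {Priv} o _ _.
Section SEM.
Variables (Princ Priv : Type) (A : Princ -> privset Priv).
Notation dm := (dom Priv).
Notation ld t := (lpo (dom Priv t)).

Lemma is_lub_ext : forall X (D : po X) r r' R, (forall k, r k = r' k) -> is_lub D r' R -> is_lub D r R.
Proof.
  intros X D r r' R E H. replace r with r'; auto. apply functional_extensionality. intro; auto.
Qed.

Lemma strict_lub : forall t1 t2 (c : nat -> lift (sem Priv t1)) l (r : nat -> lift (sem Priv t2)) R,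
  chain (ld t1) c -> is_lub (ld t1) c l -> pwf (ld t1) l ->
  (forall k, ple (ld t2) (r k) (r (S k))) ->
  (forall k, c k = Bot -> r k = Bot) -> (forall k, c k = Star -> r k = Star) ->
  (l = Bot -> R = Bot) -> (l = Star -> R = Star) ->
  (forall x k0 cx, l = Val x -> (forall k, c (k0+k) = Val (cx k)) -> chain (dm t1) cx ->
     is_lub (dm t1) cx x -> pwf (dm t1) x -> is_lub (ld t2) (fun k => r (k0+k)) R) ->
  is_lub (ld t2) r R.
Proof.
  intros t1 t2 c l r R Hc Hl Wl Mr HB HS HlB HlS HV.
  destruct (lift_lub_cases (@dom_refl Priv t1) (@dom_trans Priv t1) (@dom_lub Priv t1) Hc Hl Wl)
    as [[E H]|[[E [k0 H]]|[x [k0 [cx [E [H1 [H2 H3]]]]]]]].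
  - rewrite HlB; auto. split. intro k. rewrite HB; auto. simpl; auto. simpl; auto.
  - rewrite HlS; auto. split.
    + intro k. eapply ldom_trans.
      apply (chain_mono (ld t2) (@ldom_refl Priv t2) (@ldom_trans Priv t2) r Mr (Nat.le_max_l k k0)).
      rewrite HS. simpl; auto. apply H. lia.
    + intros u _ Hu. specialize (Hu k0). rewrite HS in Hu; auto.
  - apply (lub_untail (@ldom_refl Priv t2) (@ldom_trans Priv t2) r k0 Mr).
    eapply HV; eauto. rewrite E in Wl. exact Wl.
Qed.

Definition Good D e t (d : typed D e t) : Prop :=
 forall n P,
  (forall h, env_wf D h -> pwf (ld t) (den A d n P h)) /\
  (forall h1 h2, env_wf D h1 -> env_wf D h2 -> env_le D h1 h2 ->
     ple (ld t) (den A d n P h1) (den A d n P h2)) /\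
  (forall hc h, env_chain D hc -> env_wf D h -> env_lub D hc h ->
     is_lub (ld t) (fun k => den A d n P (hc k)) (den A d n P h)).

Lemma const_chain : forall t (v : sem Priv t), pwf (dm t) v -> chain (dm t) (fun _ => v).
Proof. intros t v H. split; auto. intro; apply dom_refl. Qed.

Lemma const_env_chain : forall D (h : env Priv D), env_wf D h -> env_chain D (fun _ => h).
Proof. intros D h H. split; auto. intro; apply env_le_refl. Qed.

Lemma good : forall D e t (d : typed D e t), Good d.
Proof.
  induction d; intros nn PP.
  -
    split; [|split].
    + intros; simpl; auto.
    + intros; simpl; auto.
    + intros. cbn [den]. apply (lub_const (ld TBool) (@ldom_refl Priv TBool)).
  -
    split; [|split].
    + intros h Hh. apply var_wf. apply Hh.
    + intros h1 h2 _ _ L. apply var_le. apply L.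
    + intros hc h _ _ L. apply val_lub. apply var_lub. apply L.
  -
    destruct (IHd1 nn PP) as [W0 [M0 C0]].
    destruct (IHd2 nn PP) as [W1 [M1 C1]].
    destruct (IHd3 nn PP) as [W2 [M2 C2]].
    assert (Wi : forall h, env_wf D h -> pwf (ld t) (den A (T_If d1 d2 d3) nn PP h)).
    { intros h Hh. cbn [den]. destruct (den A d1 nn PP h) as [| |[|]]; simpl; auto; first [apply W1; auto | apply W2; auto]. }
    assert (Mi : forall h1 h2, env_wf D h1 -> env_wf D h2 -> env_le D h1 h2 ->
        ple (ld t) (den A (T_If d1 d2 d3) nn PP h1) (den A (T_If d1 d2 d3) nn PP h2)).
    { intros h1 h2 H1 H2 L. cbn [den]. pose proof (M0 h1 h2 H1 H2 L) as Hb.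
      destruct (den A d1 nn PP h1) as [| |b1]; destruct (den A d1 nn PP h2) as [| |b2];
        simpl in Hb; try tauto; try (simpl; exact I).
      subst. destruct b2; auto. }
    split; [exact Wi|split; [exact Mi|]].
    intros hc h Hc Wh Lh.
    eapply strict_lub with (c := fun k => den A d1 nn PP (hc k)) (l := den A d1 nn PP h).
    + split. intro k; apply W0, Hc. intro k; apply M0; apply Hc.
    + apply C0; auto.
    + apply W0; auto.
    + intro k. apply Mi; apply Hc.
    + intros k E. cbn [den]. rewrite E. auto.
    + intros k E. cbn [den]. rewrite E. auto.
    + intros E. cbn [den]. rewrite E. auto.
    + intros E. cbn [den]. rewrite E. auto.
    + intros x k0 cx E H1 H2 H3 _.
      assert (Ex : forall k, cx k = x).
      { intro k. exact (proj1 H3 k). }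
      cbn [den]. rewrite E.
      destruct x.
      * apply is_lub_ext with (r' := fun k => den A d2 nn PP (hc (k0 + k))).
        intro k. rewrite H1, Ex. auto.
        apply C1; auto. apply env_chain_tail; auto. apply env_lub_tail; auto.
      * apply is_lub_ext with (r' := fun k => den A d3 nn PP (hc (k0 + k))).
        intro k. rewrite H1, Ex. auto.
        apply C2; auto. apply env_chain_tail; auto. apply env_lub_tail; auto.
  -
    assert (Wl : forall h, env_wf D h -> pwf (dm (TArr t1 t2)) (fun P' v => den A d nn P' (ext h x v))).
    { intros h Hh. split.
      - intros P' v Hv. apply (proj1 (IHd nn P')). apply ext_wf; auto.
      - intros P' c l Hc Wl' Ll. apply (proj2 (proj2 (IHd nn P')) (fun k => ext h x (c k))).
        apply ext_chain; auto. apply const_env_chain; auto. apply ext_wf; auto.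
        apply ext_lub; auto. apply env_lub_const. }
    split; [|split].
    + intros h Hh. cbn [den]. exact (Wl h Hh).
    + intros h1 h2 H1 H2 L. cbn [den]. intros P' v Hv.
      apply (proj1 (proj2 (IHd nn P'))). apply ext_wf; auto. apply ext_wf; auto.
      apply ext_le; auto. apply dom_refl.
    + intros hc h Hc Wh Lh. cbn [den]. apply val_lub. apply pointwise_lub. intros P' v Hv.
      apply (proj2 (proj2 (IHd nn P')) (fun k => ext (hc k) x v)).
      apply ext_chain; auto. apply const_chain; auto. apply ext_wf; auto.
      apply ext_lub; auto. apply lub_const. apply dom_refl.
  -
    destruct (IHd1 nn PP) as [W1 [M1 C1]].
    destruct (IHd2 nn PP) as [W2 [M2 C2]].
    assert (Wa : forall h, env_wf D h -> pwf (ld t2) (den A (T_App d1 d2) nn PP h)).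
    { intros h Hh. cbn [den]. pose proof (W1 h Hh) as Hf. pose proof (W2 h Hh) as Hv.
      remember (den A d1 nn PP h) as F1. remember (den A d2 nn PP h) as V1.
      destruct F1 as [| |f]; try (simpl; exact I).
      destruct V1 as [| |v]; try (simpl; exact I).
      exact (proj1 Hf PP v Hv). }
    assert (Ma : forall h1 h2, env_wf D h1 -> env_wf D h2 -> env_le D h1 h2 ->
        ple (ld t2) (den A (T_App d1 d2) nn PP h1) (den A (T_App d1 d2) nn PP h2)).
    { intros h1 h2 H1 H2 L. cbn [den].
      pose proof (W1 h1 H1) as Wf1. pose proof (W1 h2 H2) as Wf2.
      pose proof (W2 h1 H1) as Wv1. pose proof (W2 h2 H2) as Wv2.
      pose proof (M1 h1 h2 H1 H2 L) as Lf. pose proof (M2 h1 h2 H1 H2 L) as Lv.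
      remember (den A d1 nn PP h1) as F1. remember (den A d1 nn PP h2) as F2.
      remember (den A d2 nn PP h1) as V1. remember (den A d2 nn PP h2) as V2.
      destruct F1 as [| |f1]; destruct F2 as [| |f2]; simpl in Lf; try tauto; try (simpl; exact I).
      destruct V1 as [| |v1]; destruct V2 as [| |v2]; simpl in Lv; try tauto; try (simpl; exact I).
      eapply ldom_trans.
      - eapply wf_mono; [exact Wf1 | exact Wv1 | exact Wv2 | exact Lv].
      - apply Lf. exact Wv2. }
    split; [exact Wa|split; [exact Ma|]].
    intros hc h Hc Wh Lh.
    assert (Cf : chain (ld (TArr t1 t2)) (fun k => den A d1 nn PP (hc k))).
    { split; intro k. apply W1, Hc. apply M1; apply Hc. }
    eapply strict_lub with (c := fun k => den A d1 nn PP (hc k)) (l := den A d1 nn PP h).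
    + exact Cf.
    + apply C1; auto.
    + apply W1; auto.
    + intro k. apply Ma; apply Hc.
    + intros k E. cbn [den]. rewrite E. auto.
    + intros k E. cbn [den]. rewrite E. auto.
    + intros E. cbn [den]. rewrite E. auto.
    + intros E. cbn [den]. rewrite E. auto.
    + intros F k0 Fc EF HF1 HF2 HF3 WF. cbv beta in HF1.
      eapply strict_lub with (c := fun k => den A d2 nn PP (hc (k0 + k))) (l := den A d2 nn PP h).
      * split; intro k. apply W2, Hc. replace (k0 + S k) with (S (k0 + k)) by lia. apply M2; apply Hc.
      * apply C2; auto. apply env_chain_tail; auto. apply env_lub_tail; auto.
      * apply W2; auto.
      * intro k. replace (k0 + S k) with (S (k0 + k)) by lia. apply Ma; apply Hc.
      * intros k E. cbn [den]. rewrite HF1. cbv beta in E. rewrite E. auto.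
      * intros k E. cbn [den]. rewrite HF1. cbv beta in E. rewrite E. auto.
      * intros E. cbn [den]. rewrite EF. rewrite E. auto.
      * intros E. cbn [den]. rewrite EF. rewrite E. auto.
      * intros V k1 Vc EV HV1 HV2 HV3 WV. cbv beta in HV1.
        apply is_lub_ext with (r' := fun k => Fc (k1 + k) PP (Vc k)).
        { intro k. cbn [den]. rewrite (HF1 (k1 + k)). rewrite HV1. auto. }
        cbn [den]. rewrite EF, EV.
        apply (@diag_lub Priv t1 t2 (fun k => Fc (k1 + k)) F Vc V PP).
        -- split; intro k. apply HF2. replace (k1 + S k) with (S (k1 + k)) by lia. apply HF2.
        -- apply (lub_tail (@dom_refl Priv (TArr t1 t2)) (@dom_trans Priv (TArr t1 t2)) k1 (proj2 HF2) HF3).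
        -- exact WF.
        -- exact HV2.
        -- exact HV3.
        -- exact WV.
  -
    pose (G := fun (h : env Priv D) (g : sem Priv (TArr t1 t2)) =>
           (fun P' v => den A d1 nn P' (ext (ext h f g) x v)) : sem Priv (TArr t1 t2)).
    assert (HGwf : forall h g, env_wf D h -> pwf (dm (TArr t1 t2)) g -> pwf (dm (TArr t1 t2)) (G h g)).
    { intros h g Hh Hg. split.
      - intros P' v Hv. apply (proj1 (IHd1 nn P')). apply ext_wf; auto. apply ext_wf; auto.
      - intros P' c l Hc Wl' Ll. apply (proj2 (proj2 (IHd1 nn P')) (fun k => ext (ext h f g) x (c k))).
        apply ext_chain; auto. apply const_env_chain; auto. apply ext_wf; auto.
        apply ext_wf; auto. apply ext_wf; auto.
        apply ext_lub; auto. apply env_lub_const. }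
    assert (HGmono : forall h1 h2 g1 g2, env_wf D h1 -> env_wf D h2 -> env_le D h1 h2 ->
       pwf (dm (TArr t1 t2)) g1 -> pwf (dm (TArr t1 t2)) g2 -> ple (dm (TArr t1 t2)) g1 g2 ->
       ple (dm (TArr t1 t2)) (G h1 g1) (G h2 g2)).
    { intros h1 h2 g1 g2 H1 H2 L Wg1 Wg2 Lg P' v Hv.
      apply (proj1 (proj2 (IHd1 nn P'))).
      apply ext_wf; auto. apply ext_wf; auto. apply ext_wf; auto. apply ext_wf; auto.
      apply ext_le. apply ext_le; auto. apply dom_refl. }
    assert (HGcont : forall hc h gc g, (forall k, env_wf D (hc k)) ->
       (forall k, env_le D (hc k) (hc (S k))) -> env_wf D h -> env_lub D hc h ->
       chain (dm (TArr t1 t2)) gc -> is_lub (dm (TArr t1 t2)) gc g -> pwf (dm (TArr t1 t2)) g ->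
       is_lub (dm (TArr t1 t2)) (fun k => G (hc k) (gc k)) (G h g)).
    { intros hc h gc g Wc Mc Wh Lh Cg Lg Wg. apply pointwise_lub. intros P' v Hv.
      apply (proj2 (proj2 (IHd1 nn P')) (fun k => ext (ext (hc k) f (gc k)) x v)).
      apply ext_chain. apply ext_chain; auto. split; auto. apply const_chain; auto.
      apply ext_wf; auto. apply ext_wf; auto.
      apply ext_lub. apply ext_lub; auto. apply lub_const. apply dom_refl. }
    pose proof (fixp_wf (env_wf D) (env_le D) (env_lub D) G (@env_le_refl Priv D)
                  (@env_lub_const Priv D) HGwf HGmono HGcont) as FW.
    pose proof (fixp_mono (env_wf D) (env_le D) (env_lub D) G (@env_le_refl Priv D)
                  (@env_lub_const Priv D) HGwf HGmono HGcont) as FM.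
    pose proof (fixp_cont (env_wf D) (env_le D) (env_lub D) G (@env_le_refl Priv D)
                  (@env_lub_const Priv D) HGwf HGmono HGcont) as FC.
    destruct (IHd2 nn PP) as [W2 [M2 C2]].
    split; [|split].
    + intros h Hh. cbn [den]. apply (W2 (ext h f (fixp (G h)))). apply ext_wf; auto.
    + intros h1 h2 H1 H2 L. cbn [den].
      apply (M2 (ext h1 f (fixp (G h1))) (ext h2 f (fixp (G h2)))).
      apply ext_wf; auto. apply ext_wf; auto. apply ext_le; auto.
    + intros hc h Hc Wh Lh. cbn [den].
      apply (C2 (fun k => ext (hc k) f (fixp (G (hc k)))) (ext h f (fixp (G h)))).
      * apply ext_chain; auto. split; intro k. apply FW, Hc. apply FM; apply Hc.
      * apply ext_wf; auto.
      * apply ext_lub; auto. apply FC; auto; apply Hc.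
  -
    apply IHd.
  -
    apply IHd.
  -
    destruct (IHd nn PP) as [W [M C]]. cbn [den].
    destruct (dec (PP p)).
    + auto.
    + split; [|split]; intros; simpl; auto. apply (lub_const (ld t) (@ldom_refl Priv t)).
  -
    destruct (IHd1 nn PP) as [W1 [M1 C1]]. destruct (IHd2 nn PP) as [W2 [M2 C2]]. cbn [den].
    destruct (dec (PP p)); auto.
Qed.

End SEM.
Section MAIN.
Variables (Princ Priv : Type) (A : Princ -> privset Priv) (p : Priv).
Notation dm := (dom Priv).
Notation ld t := (lpo (dom Priv t)).

Definition Gof D f x t1 t2 e1 (d1 : typed ((x,t1)::(f,TArr t1 t2)::D) e1 t2) (nn : Princ) :=
  fun (h : env Priv D) (g : sem Priv (TArr t1 t2)) =>
    (fun P' v => den A d1 nn P' (ext (ext h f g) x v)) : sem Priv (TArr t1 t2).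

Section G.
Variables (D : ctx) (f x : var) (t1 t2 : ty) (e1 : expr Princ Priv)
  (d1 : typed ((x,t1)::(f,TArr t1 t2)::D) e1 t2) (nn : Princ).
Let G := Gof d1 nn.

Lemma Gof_wf : forall h g, env_wf D h -> pwf (dm (TArr t1 t2)) g -> pwf (dm (TArr t1 t2)) (G h g).
Proof.
  intros h g Hh Hg. split.
  - intros P' v Hv. apply (proj1 (good A d1 nn P')). apply ext_wf; auto. apply ext_wf; auto.
  - intros P' c l Hc Wl' Ll. apply (proj2 (proj2 (good A d1 nn P')) (fun k => ext (ext h f g) x (c k))).
    apply ext_chain; auto. apply const_env_chain; auto. apply ext_wf; auto.
    apply ext_wf; auto. apply ext_wf; auto.
    apply ext_lub; auto. apply env_lub_const.
Qed.

Lemma Gof_mono : forall h1 h2 g1 g2, env_wf D h1 -> env_wf D h2 -> env_le D h1 h2 ->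
   pwf (dm (TArr t1 t2)) g1 -> pwf (dm (TArr t1 t2)) g2 -> ple (dm (TArr t1 t2)) g1 g2 ->
   ple (dm (TArr t1 t2)) (G h1 g1) (G h2 g2).
Proof.
  intros h1 h2 g1 g2 H1 H2 L Wg1 Wg2 Lg P' v Hv.
  apply (proj1 (proj2 (good A d1 nn P'))).
  apply ext_wf; auto. apply ext_wf; auto. apply ext_wf; auto. apply ext_wf; auto.
  apply ext_le. apply ext_le; auto. apply dom_refl.
Qed.

Lemma Gof_cont : forall hc h gc g, (forall k, env_wf D (hc k)) ->
   (forall k, env_le D (hc k) (hc (S k))) -> env_wf D h -> env_lub D hc h ->
   chain (dm (TArr t1 t2)) gc -> is_lub (dm (TArr t1 t2)) gc g -> pwf (dm (TArr t1 t2)) g ->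
   is_lub (dm (TArr t1 t2)) (fun k => G (hc k) (gc k)) (G h g).
Proof.
  intros hc h gc g Wc Mc Wh Lh Cg Lg Wg. apply pointwise_lub. intros P' v Hv.
  apply (proj2 (proj2 (good A d1 nn P')) (fun k => ext (ext (hc k) f (gc k)) x v)).
  apply ext_chain. apply ext_chain; auto. split; auto. apply const_chain; auto.
  apply ext_wf; auto. apply ext_wf; auto.
  apply ext_lub. apply ext_lub; auto. apply lub_const. apply dom_refl.
Qed.
End G.

Lemma pset_ext : forall (P Q : privset Priv), (forall q, P q <-> Q q) -> P = Q.
Proof.
  intros P Q H. apply functional_extensionality. intro q. apply propositional_extensionality. auto.
Qed.

Lemma dec_iff : forall Q1 Q2 : Prop, (Q1 <-> Q2) -> dec Q1 = dec Q2.
Proof.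
  intros Q1 Q2 H. unfold dec.
  destruct (excluded_middle_informative Q1); destruct (excluded_middle_informative Q2); tauto.
Qed.

Lemma seq_refl : forall t (u : lift (sem Priv t)), seq_l t u u.
Proof. intros. split; apply ldom_refl. Qed.

Lemma main : forall D e t (d : typed D e t), ppure p e ->
  forall n P h, env_wf D h -> env_pure p D h ->
  seq_l t (den A d n P h) (den A d n (setminus1 P p) h) /\ pure_l p t (den A d n P h).
Proof.
  induction d; intros Hpe nn PP h Hh Hph; cbn [den].
  - split. apply seq_refl. simpl; auto.
  - split. apply seq_refl. simpl. apply var_pure. apply Hph.
  - destruct Hpe as [pe0 [pe1 pe2]].
    destruct (IHd1 pe0 nn PP h Hh Hph) as [Sb _].
    remember (den A d1 nn PP h) as B1. remember (den A d1 nn (setminus1 PP p) h) as B2.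
    destruct B1 as [| |b1]; destruct B2 as [| |b2]; destruct Sb as [S1 S2]; simpl in S1, S2;
      try tauto; try (split; [split; exact I | exact I]).
    subst b2. destruct b1; auto.
  - split. apply seq_refl. simpl. intros P' v Hv Hpv.
    destruct (IHd Hpe nn P' (ext h x v)) as [S1 P1].
    apply ext_wf; auto. apply ext_pure; auto. split; [exact P1 | exact S1].
  - destruct Hpe as [pe1 pe2].
    destruct (IHd1 pe1 nn PP h Hh Hph) as [Sf Pf].
    destruct (IHd2 pe2 nn PP h Hh Hph) as [Sv Pv].
    pose proof (proj1 (good A d1 nn PP) h Hh) as Wf.
    pose proof (proj1 (good A d1 nn (setminus1 PP p)) h Hh) as Wf'.
    pose proof (proj1 (good A d2 nn PP) h Hh) as Wv.
    pose proof (proj1 (good A d2 nn (setminus1 PP p)) h Hh) as Wv'.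
    remember (den A d1 nn PP h) as F1. remember (den A d1 nn (setminus1 PP p) h) as F2.
    remember (den A d2 nn PP h) as V1. remember (den A d2 nn (setminus1 PP p) h) as V2.
    destruct F1 as [| |f1]; destruct F2 as [| |f2]; destruct Sf as [Sf1 Sf2]; simpl in Sf1, Sf2;
      try tauto; try (split; [split; exact I | exact I]).
    destruct V1 as [| |v1]; destruct V2 as [| |v2]; destruct Sv as [Sv1 Sv2]; simpl in Sv1, Sv2;
      try tauto; try (split; [split; exact I | exact I]).
    simpl in Pf, Pv, Wf, Wf', Wv, Wv'.
    destruct (Pf PP v1 Wv Pv) as [Pr [Sr1 Sr2]].
    split; [|exact Pr]. split.
    + eapply ldom_trans; [exact Sr1|]. eapply ldom_trans; [apply (Sf1 _ v1 Wv)|].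
      eapply wf_mono; [exact Wf' | exact Wv | exact Wv' | exact Sv1].
    + eapply ldom_trans; [|exact Sr2]. eapply ldom_trans; [|apply (Sf2 _ v1 Wv)].
      eapply wf_mono; [exact Wf' | exact Wv' | exact Wv | exact Sv2].
  - destruct Hpe as [pe1 pe2].
    pose (G := Gof d1 nn).
    pose proof (Gof_wf d1 nn) as HGwf. pose proof (Gof_mono d1 nn) as HGmono.
    pose proof (Gof_cont d1 nn) as HGcont.
    fold G in HGwf, HGmono, HGcont.
    pose proof (fixp_wf (env_wf D) (env_le D) (env_lub D) G (@env_le_refl Priv D)
                  (@env_lub_const Priv D) HGwf HGmono HGcont h Hh) as FW.
    pose proof (proj2 (fixp_spec (env_wf D) (env_le D) (env_lub D) G (@env_le_refl Priv D)
                  (@env_lub_const Priv D) HGwf HGmono HGcont h Hh)) as FL.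
    pose proof (it_chain (env_wf D) (env_le D) G (@env_le_refl Priv D) HGwf HGmono h Hh) as IC.
    assert (FP : pure p (TArr t1 t2) (fixp (G h))).
    { apply (pure_adm p (TArr t1 t2) IC); auto.
      intro k. induction k.
      - intros P' v _ _. split. exact I. split; exact I.
      - intros P' v Hv Hpv. change (it G h (S k)) with (G h (it G h k)).
        destruct (IHd1 pe1 nn P' (ext (ext h f (it G h k)) x v)) as [S1 P1].
        apply ext_wf; auto. apply ext_wf; auto. apply (proj1 IC).
        apply ext_pure; auto. apply ext_pure; auto.
        split; [exact P1 | exact S1]. }
    apply (IHd2 pe2 nn PP (ext h f (fixp (G h)))).
    apply ext_wf; auto. apply ext_pure; auto.
  - destruct (IHd Hpe n (fun q => PP q /\ A n q) h Hh Hph) as [S1 P1].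
    replace (fun q => setminus1 PP p q /\ A n q) with (setminus1 (fun q => PP q /\ A n q) p).
    split; auto. apply pset_ext. intro q. unfold setminus1. tauto.
  - destruct (classic (p0 = p)) as [E|E].
    + subst p0. unfold join_priv. destruct (dec (A nn p)).
      * replace (fun q => setminus1 PP p q \/ q = p) with (fun q => PP q \/ q = p).
        split. apply seq_refl. apply (IHd Hpe nn _ h Hh Hph).
        apply pset_ext. intro q. unfold setminus1. destruct (classic (q = p)); tauto.
      * apply IHd; auto.
    + replace (join_priv A nn (setminus1 PP p) p0) with (setminus1 (join_priv A nn PP p0) p).
      apply IHd; auto.
      unfold join_priv. destruct (dec (A nn p0)); auto.
      apply pset_ext. intro q. unfold setminus1. split; intuition; subst; auto.
  - destruct Hpe as [Hq pe].
    rewrite (dec_iff (Q1 := setminus1 PP p p0) (Q2 := PP p0)).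
    destruct (dec (PP p0)). apply IHd; auto. split; [split; exact I | exact I].
    unfold setminus1. split; intuition.
  - destruct Hpe as [Hq [pe1 pe2]].
    rewrite (dec_iff (Q1 := setminus1 PP p p0) (Q2 := PP p0)).
    destruct (dec (PP p0)). apply IHd1; auto. apply IHd2; auto.
    unfold setminus1. split; intuition.
Qed.

End MAIN.

Theorem lemma4 (Princ Priv : Type) (A : Princ -> Priv -> Prop) (p : Priv)
  (D : ctx) (e : expr Princ Priv) (t : ty) (d : typed D e t) :
  ppure p e ->
  forall (n : Princ) (P : privset Priv) (h : env Priv D),
    env_wf D h -> env_pure p D h ->
    seq_l t (den A d n P h) (den A d n (setminus1 P p) h) /\
    pure_l p t (den A d n P h).
Proof. intros. apply main; auto. Qed.
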